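(* Let $\kappa\in\mathbb{K}$, let $(\mathfrak{g},[-,-,-]_\mathfrak{g},\alpha_\mathfrak{g})$ and $(\mathfrak{h},[-,-,-]_\mathfrak{h},\alpha_\mathfrak{h})$ be Hom-Lie triple systems and $\theta$ an action of $\mathfrak{g}$ on $\mathfrak{h}$. A linear map $\mathcal{A}:\mathfrak{h}\to\mathfrak{g}$ is a $\kappa$-weighted $\mathcal{O}$-operator from $\mathfrak{h}$ to $\mathfrak{g}$ with respect to $\theta$ if and only if the linear map $N_\mathcal{A}:\mathfrak{g}\oplus\mathfrak{h}\to\mathfrak{g}\oplus\mathfrak{h}$, $N_\mathcal{A}(x+u)=x+\mathcal{A}u$ (block matrix $\begin{pmatrix}\mathrm{id}&\mathcal{A}\\0&0\end{pmatrix}$), is a Nijenhuis operator on the semidirect product Hom-Lie triple system $\mathfrak{g}\ltimes_\theta\mathfrak{h}$.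
   Context: All vector spaces are over a field $\mathbb{K}$ of characteristic zero. A Hom-Lie triple system $(\mathfrak{g},[-,-,-]_\mathfrak{g},\alpha_\mathfrak{g})$ is a vector space $\mathfrak{g}$ with a trilinear map $[-,-,-]_\mathfrak{g}$ and a linear map $\alpha_\mathfrak{g}$ with $\alpha_\mathfrak{g}([x,y,z]_\mathfrak{g})=[\alpha_\mathfrak{g}(x),\alpha_\mathfrak{g}(y),\alpha_\mathfrak{g}(z)]_\mathfrak{g}$ such that for all $x,y,z,a,b$: $[x,y,z]_\mathfrak{g}+[y,x,z]_\mathfrak{g}=0$; $[x,y,z]_\mathfrak{g}+[z,x,y]_\mathfrak{g}+[y,z,x]_\mathfrak{g}=0$; $[\alpha_\mathfrak{g}(a),\alpha_\mathfrak{g}(b),[x,y,z]_\mathfrak{g}]_\mathfrak{g}=[[a,b,x]_\mathfrak{g},\alpha_\mathfrak{g}(y),\alpha_\mathfrak{g}(z)]_\mathfrak{g}+[\alpha_\mathfrak{g}(x),[a,b,y]_\mathfrak{g},\alpha_\mathfrak{g}(z)]_\mathfrak{g}+[\alpha_\mathfrak{g}(x),\alpha_\mathfrak{g}(y),[a,b,z]_\mathfrak{g}]_\mathfrak{g}$. A representation of $\mathfrak{g}$ on $(V,\beta)$ is a bilinear map $\theta:\mathfrak{g}\times\mathfrak{g}\to\mathrm{End}(V)$ such that, with $D(x,y)=\theta(y,x)-\theta(x,y)$, for all $x,y,a,b$: $\theta(\alpha_\mathfrak{g}(x),\alpha_\mathfrak{g}(y))\circ\beta=\beta\circ\theta(x,y)$;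 $\theta(\alpha_\mathfrak{g}(a),\alpha_\mathfrak{g}(b))\theta(x,y)-\theta(\alpha_\mathfrak{g}(y),\alpha_\mathfrak{g}(b))\theta(x,a)-\theta(\alpha_\mathfrak{g}(x),[y,a,b]_\mathfrak{g})\circ\beta+D(\alpha_\mathfrak{g}(y),\alpha_\mathfrak{g}(a))\theta(x,b)=0$; $\theta(\alpha_\mathfrak{g}(a),\alpha_\mathfrak{g}(b))D(x,y)-D(\alpha_\mathfrak{g}(x),\alpha_\mathfrak{g}(y))\theta(a,b)+\theta([x,y,a]_\mathfrak{g},\alpha_\mathfrak{g}(b))\circ\beta+\theta(\alpha_\mathfrak{g}(a),[x,y,b]_\mathfrak{g})\circ\beta=0$. An action of $\mathfrak{g}$ on a Hom-Lie triple system $(\mathfrak{h},[-,-,-]_\mathfrak{h},\alpha_\mathfrak{h})$ is a representation $\theta$ of $\mathfrak{g}$ on $(\mathfrak{h},\alpha_\mathfrak{h})$ such that for all $x,y\in\mathfrak{g}$, $u,v,w\in\mathfrak{h}$: $\theta(\alpha_\mathfrak{g}(x),\alpha_\mathfrak{g}(y))[u,v,w]_\mathfrak{h}=[\theta(x,y)u,\alpha_\mathfrak{h}(v),\alpha_\mathfrak{h}(w)]_\mathfrak{h}+[\alpha_\mathfrak{h}(u),\theta(x,y)v,\alpha_\mathfrak{h}(w)]_\mathfrak{h}+[\alpha_\mathfrak{h}(u),\alpha_\mathfrak{h}(v),\theta(x,y)w]_\mathfrak{h}$ and $\theta(\alpha_\mathfrak{g}(x),\alpha_\mathfrak{g}(y))[u,v,w]_\mathfrak{h}=[\alpha_\mathfrak{h}(u),\alpha_\mathfrak{h}(v),\theta(x,y)w]_\mathfrak{h}=0$.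 The semidirect product $\mathfrak{g}\ltimes_\theta\mathfrak{h}$ is $\mathfrak{g}\oplus\mathfrak{h}$ with twist map $(\alpha_\mathfrak{g}\oplus\alpha_\mathfrak{h})(x+u)=\alpha_\mathfrak{g}(x)+\alpha_\mathfrak{h}(u)$ and bracket $[x+u,y+v,z+w]_\theta=[x,y,z]_\mathfrak{g}+D(x,y)w-\theta(x,z)v+\theta(y,z)u+\kappa[u,v,w]_\mathfrak{h}$; it is a Hom-Lie triple system. A $\kappa$-weighted $\mathcal{O}$-operator from $\mathfrak{h}$ to $\mathfrak{g}$ with respect to $\theta$ is a linear map $\mathcal{A}:\mathfrak{h}\to\mathfrak{g}$ with $\mathcal{A}\circ\alpha_\mathfrak{h}=\alpha_\mathfrak{g}\circ\mathcal{A}$ and $[\mathcal{A}u,\mathcal{A}v,\mathcal{A}w]_\mathfrak{g}=\mathcal{A}\big(D(\mathcal{A}u,\mathcal{A}v)w-\theta(\mathcal{A}u,\mathcal{A}w)v+\theta(\mathcal{A}v,\mathcal{A}w)u+\kappa[u,v,w]_\mathfrak{h}\big)$ for all $u,v,w\in\mathfrak{h}$. A Nijenhuis operator on a Hom-Lie triple system $(L,[-,-,-],\alpha)$ is a linear map $N:L\to L$ with $N\circ\alpha=\alpha\circ N$ and, for all $x,y,z\in L$, $[Nx,Ny,Nz]=N([x,Ny,Nz]+[Nx,y,Nz]+[Nx,Ny,z])-N^2([Nx,y,z]+[x,Ny,z]+[x,y,Nz])+N^3[x,y,z]$. *)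

(* Defs.v *)
From HB Require Import structures.
From mathcomp Require Import all_boot all_order all_algebra.
Set Implicit Arguments. Unset Strict Implicit. Unset Printing Implicit Defensive.
Import GRing.Theory.
Local Open Scope ring_scope.

Section HomLTS.
Variable K : fieldType.

Definition lin (U V : lmodType K) (f : U -> V) : Prop :=
  forall (a : K) (u v : U), f (a *: u + v) = a *: f u + f v.

Definition trilin (V : lmodType K) (br : V -> V -> V -> V) : Prop :=
  (forall y z, lin (fun x => br x y z)) /\
  (forall x z, lin (fun y => br x y z)) /\
  (forall x y, lin (fun z => br x y z)).

Definition HomLTS (V : lmodType K) (br : V -> V -> V -> V) (al : V -> V) : Prop :=
  [/\ trilin br, lin al,
      (forall x y z, al (br x y z) = br (al x) (al y) (al z)) &
      [/\ (forall x y z, br x y z + br y x z = 0),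
      (forall x y z, br x y z + br z x y + br y z x = 0) &
      (forall a b x y z,
        br (al a) (al b) (br x y z) =
        br (br a b x) (al y) (al z) + br (al x) (br a b y) (al z)
        + br (al x) (al y) (br a b z))]].

Definition Dop (G V : lmodType K) (theta : G -> G -> V -> V) (x y : G) (v : V) : V :=
  theta y x v - theta x y v.

Definition representation (G V : lmodType K) (brg : G -> G -> G -> G) (alg : G -> G)
    (theta : G -> G -> V -> V) (be : V -> V) : Prop :=
  [/\ lin be,
      (forall x y, lin (theta x y)),
      (forall y v, lin (fun x => theta x y v)),
      (forall x v, lin (fun y => theta x y v)) &
      [/\ (forall x y v, theta (alg x) (alg y) (be v) = be (theta x y v)),
      (forall x y a b v,
        theta (alg a) (alg b) (theta x y v) - theta (alg y) (alg b) (theta x a v)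
        - theta (alg x) (brg y a b) (be v) + Dop theta (alg y) (alg a) (theta x b v) = 0) &
      (forall x y a b v,
        theta (alg a) (alg b) (Dop theta x y v) - Dop theta (alg x) (alg y) (theta a b v)
        + theta (brg x y a) (alg b) (be v) + theta (alg a) (brg x y b) (be v) = 0)]].

Definition action (G H : lmodType K) (brg : G -> G -> G -> G) (alg : G -> G)
    (brh : H -> H -> H -> H) (alh : H -> H) (theta : G -> G -> H -> H) : Prop :=
  [/\ representation brg alg theta alh,
      (forall x y u v w,
        theta (alg x) (alg y) (brh u v w) =
        brh (theta x y u) (alh v) (alh w) + brh (alh u) (theta x y v) (alh w)
        + brh (alh u) (alh v) (theta x y w)),
      (forall x y u v w, theta (alg x) (alg y) (brh u v w) = 0) &
      (forall x y u v w, brh (alh u) (alh v) (theta x y w) = 0)].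

(* Semidirect product g ⋉_theta h on g * h (x + u is the pair (x, u)). *)
Definition sd_bracket (G H : lmodType K) (brg : G -> G -> G -> G)
    (brh : H -> H -> H -> H) (theta : G -> G -> H -> H) (kappa : K)
    (p q r : G * H) : G * H :=
  let: (x, u) := p in let: (y, v) := q in let: (z, w) := r in
  (brg x y z, Dop theta x y w - theta x z v + theta y z u + kappa *: brh u v w).

Definition sd_twist (G H : lmodType K) (alg : G -> G) (alh : H -> H) (p : G * H) : G * H :=
  (alg p.1, alh p.2).

Definition O_operator (G H : lmodType K) (brg : G -> G -> G -> G) (alg : G -> G)
    (brh : H -> H -> H -> H) (alh : H -> H) (theta : G -> G -> H -> H) (kappa : K)
    (A : H -> G) : Prop :=
  lin A /\
  (forall u, A (alh u) = alg (A u)) /\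
  (forall u v w,
    brg (A u) (A v) (A w) =
    A (Dop theta (A u) (A v) w - theta (A u) (A w) v + theta (A v) (A w) u
       + kappa *: brh u v w)).

Definition Nijenhuis (L : lmodType K) (br : L -> L -> L -> L) (al : L -> L)
    (N : L -> L) : Prop :=
  lin N /\
  (forall x, N (al x) = al (N x)) /\
  (forall x y z,
    br (N x) (N y) (N z) =
    N (br x (N y) (N z) + br (N x) y (N z) + br (N x) (N y) z)
    - N (N (br (N x) y z + br x (N y) z + br x y (N z)))
    + N (N (N (br x y z)))).

Definition N_of (G H : lmodType K) (A : H -> G) (p : G * H) : G * H :=
  (p.1 + A p.2, 0).

End HomLTS.

(* Main.v *)
Require Import Defs.
From mathcomp Require Import all_boot all_order all_algebra.
Local Open Scope ring_scope.
Import GRing.Theory.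
Inductive zexpr := ZAtom of nat | ZAdd of zexpr & zexpr | ZOpp of zexpr | ZZero.

Fixpoint zeval (V : zmodType) (env : seq V) (e : zexpr) : V :=
  match e with
  | ZAtom n => nth 0 env n
  | ZAdd a b => zeval V env a + zeval V env b
  | ZOpp a => - zeval V env a
  | ZZero => 0
  end.
Arguments zeval {V} env e.

Fixpoint zcoef (e : zexpr) (i : nat) : int :=
  match e with
  | ZAtom n => if n == i then 1 else 0
  | ZAdd a b => zcoef a i + zcoef b i
  | ZOpp a => - zcoef a i
  | ZZero => 0
  end.

Fixpoint zmax (e : zexpr) : nat :=
  match e with
  | ZAtom n => n.+1
  | ZAdd a b => maxn (zmax a) (zmax b)
  | ZOpp a => zmax a
  | ZZero => 0
  end.

Lemma zeval_sum (V : zmodType) (env : seq V) e B : (zmax e <= B)%N ->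
  zeval env e = \sum_(i < B) nth 0 env i *~ zcoef e i.
Proof.
elim: e => [n|a IHa b IHb|a IHa|] /=.
- move=> hn. rewrite (bigD1 (Ordinal hn)) //= eqxx mulr1z big1 ?addr0 //.
  by move=> j hj; rewrite ifN ?mulr0z // eq_sym; apply: contra hj => /eqP h; apply/eqP/val_inj.
- rewrite geq_max => /andP [ha hb]; rewrite IHa // IHb // -big_split /=.
  by apply: eq_bigr => i _; rewrite mulrzDr.
- by move=> h; rewrite IHa // -sumrN; apply: eq_bigr => i _; rewrite mulrNz.
- by move=> _; rewrite big1 // => i _; rewrite mulr0z.
Qed.

Lemma zsound (V : zmodType) (env : seq V) e1 e2 :
  all (fun i => zcoef e1 i == zcoef e2 i) (iota 0 (maxn (zmax e1) (zmax e2))) ->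
  zeval env e1 = zeval env e2.
Proof.
move=> /allP h.
rewrite (@zeval_sum _ _ e1 (maxn (zmax e1) (zmax e2))) ?leq_maxl //.
rewrite (@zeval_sum _ _ e2 (maxn (zmax e1) (zmax e2))) ?leq_maxr //.
apply: eq_bigr => i _; congr (_ *~ _); apply/eqP/h.
by rewrite mem_iota /= add0n ltn_ord.
Qed.

Ltac zlookup t env :=
  lazymatch env with
  | t :: _ => constr:(0%N)
  | _ :: ?r => let n := zlookup t r in constr:(S n)
  end.

Ltac zreify t env :=
  lazymatch t with
  | (?a + ?b)%R =>
      let ra := zreify a env in
      lazymatch ra with (?ea, ?env1) =>
      let rb := zreify b env1 in
      lazymatch rb with (?eb, ?env2) => constr:((ZAdd ea eb, env2)) end end
  | (- ?a)%R =>
      let ra := zreify a env in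
      lazymatch ra with (?ea, ?env1) => constr:((ZOpp ea, env1)) end
  | 0%R => constr:((ZZero, env))
  | _ =>
      match constr:(tt) with
      | _ => let n := zlookup t env in constr:((ZAtom n, env))
      | _ => let n := eval compute in (size env) in
             let env' := eval cbv beta iota delta [cat] in (env ++ [:: t]) in
             constr:((ZAtom n, env'))
      end
  end.

Ltac zmodt :=
  lazymatch goal with
  | |- @eq ?V ?l ?r =>
      let rl := zreify l (@nil V) in
      lazymatch rl with (?el, ?env1) =>
      let rr := zreify r env1 in
      lazymatch rr with (?er, ?env2) =>
        change (@zeval _ env2 el = @zeval _ env2 er);
        apply: zsound; vm_compute; reflexivity
      end end
  end.

Set Implicit Arguments. Unset Strict Implicit.

Section Lin.
Variable K : fieldType.
Lemma linD (U V : lmodType K) (f : U -> V) : lin f -> forall u v, f (u + v) = f u + f v.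
Proof. by move=> h u v; have := h 1 u v; rewrite !scale1r. Qed.
Lemma lin0 (U V : lmodType K) (f : U -> V) : lin f -> f 0 = 0.
Proof. by move=> h; have := linD h 0 0; rewrite addr0 => /(congr1 (fun t => t - f 0)); rewrite addrK subrr. Qed.
Lemma linN (U V : lmodType K) (f : U -> V) : lin f -> forall u, f (- u) = - f u.
Proof. by move=> h u; have := h (-1) u 0; rewrite addr0 (lin0 h) addr0 !scaleN1r. Qed.
Lemma linZ (U V : lmodType K) (f : U -> V) : lin f -> forall a u, f (a *: u) = a *: f u.
Proof. by move=> h a u; have := h a u 0; rewrite addr0 (lin0 h) addr0. Qed.
End Lin.

Theorem mainTheorem3 (K : fieldType) (charK : [pchar K] =i pred0) (kappa : K)
    (G H : lmodType K)
    (brg : G -> G -> G -> G) (alg : G -> G)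
    (brh : H -> H -> H -> H) (alh : H -> H)
    (theta : G -> G -> H -> H)
    (HG : HomLTS brg alg) (HH : HomLTS brh alh)
    (Hact : action brg alg brh alh theta)
    (A : H -> G) (HA : lin A) :
  O_operator brg alg brh alh theta kappa A <->
  Nijenhuis (sd_bracket brg brh theta kappa) (sd_twist alg alh) (N_of A).
Proof.
case: HG => [[g1 [g2 g3]] galg _ _].
case: HH => [[h1 [h2 h3]] halh _ _].
case: Hact => [[_ t3 t1 t2 _] _ _ _].
have AD := linD HA; have A0 := lin0 HA; have AN := linN HA; have AZ := linZ HA.
have gD1 : forall a b y z, brg (a + b) y z = brg a y z + brg b y z by move=> *; exact: (linD (g1 _ _)).
have gD2 : forall a b y z, brg y (a + b) z = brg y a z + brg y b z by move=> *; exact: (linD (g2 _ _)).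
have gD3 : forall a b y z, brg y z (a + b) = brg y z a + brg y z b by move=> *; exact: (linD (g3 _ _)).
have gN1 : forall a y z, brg (- a) y z = - brg a y z by move=> *; exact: (linN (g1 _ _)).
have gN2 : forall a y z, brg y (- a) z = - brg y a z by move=> *; exact: (linN (g2 _ _)).
have gN3 : forall a y z, brg y z (- a) = - brg y z a by move=> *; exact: (linN (g3 _ _)).
have g01 : forall y z, brg 0 y z = 0 by move=> *; exact: (lin0 (g1 _ _)).
have g02 : forall y z, brg y 0 z = 0 by move=> *; exact: (lin0 (g2 _ _)).
have g03 : forall y z, brg y z 0 = 0 by move=> *; exact: (lin0 (g3 _ _)).
have h01 : forall y z, brh 0 y z = 0 by move=> *; exact: (lin0 (h1 _ _)).
have h02 : forall y z, brh y 0 z = 0 by move=> *; exact: (lin0 (h2 _ _)).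
have h03 : forall y z, brh y z 0 = 0 by move=> *; exact: (lin0 (h3 _ _)).
have tD1 : forall a b y v, theta (a + b) y v = theta a y v + theta b y v by move=> *; exact: (linD (t1 _ _)).
have tD2 : forall a b y v, theta y (a + b) v = theta y a v + theta y b v by move=> *; exact: (linD (t2 _ _)).
have tD3 : forall a b y z, theta y z (a + b) = theta y z a + theta y z b by move=> *; exact: (linD (t3 _ _)).
have tN1 : forall a y v, theta (- a) y v = - theta a y v by move=> *; exact: (linN (t1 _ _)).
have tN2 : forall a y v, theta y (- a) v = - theta y a v by move=> *; exact: (linN (t2 _ _)).
have tN3 : forall a y z, theta y z (- a) = - theta y z a by move=> *; exact: (linN (t3 _ _)).
have t01 : forall y v, theta 0 y v = 0 by move=> *; exact: (lin0 (t1 _ _)).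
have t02 : forall y v, theta y 0 v = 0 by move=> *; exact: (lin0 (t2 _ _)).
have t03 : forall y z, theta y z 0 = 0 by move=> *; exact: (lin0 (t3 _ _)).
have algD := linD galg; have alg0 := lin0 galg; have alh0 := lin0 halh.
split.
- move=> [_ [HAal HO]]; split; [|split].
  + move=> a [x u] [y v] /=; rewrite /N_of /=.
    congr pair; rewrite /= ?scaler0 ?addr0 // ?AD ?AZ ?scalerDr; zmodt.
  + by move=> [x u]; rewrite /N_of /sd_twist /= HAal algD alh0.
  + move=> [x u] [y v] [z w]; rewrite /N_of /sd_bracket /Dop /=.
    congr pair => /=; rewrite ?(t03, h01, h02, h03, scaler0, A0, addr0); last by zmodt.
    rewrite ?(AD, AN, AZ, gD1, gD2, gD3, gN1, gN2, gN3, tD1, tD2, tD3, tN1, tN2, tN3) HO.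
    rewrite /Dop ?(AD, AN, AZ, A0).
    zmodt.
- move=> [_ [Hal Hbr]]; split => //; split.
  + move=> u; have := congr1 fst (Hal (0, u)); rewrite /N_of /sd_twist /=.
    by rewrite !add0r alg0 add0r.
  + move=> u v w; have := congr1 fst (Hbr (0, u) (0, v) (0, w)).
    rewrite /N_of /sd_bracket /Dop /=.
    rewrite !(AD, AN, AZ, A0, addr0, t03, t01, t02, h01, h02, h03, scaler0, subrr, add0r, sub0r).
    rewrite !(gD1, gD2, gD3, gN1, gN2, gN3, tD1, tD2, tD3, tN1, tN2, tN3, g01, g02, g03, t01, t02, t03).
    rewrite ?(AD, AN, AZ, A0) => ->.
    rewrite ?(AD, AN, AZ, A0).
    zmodt.
Qed.
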